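(* Let $\varphi$ be a formula and $T$ a set of formulae of $\mathcal L$. There exist a set $Q$ of new predicate symbols (not in $\mathcal L$) and an order clausal theory $S^\varphi_T$ over $\mathcal L\cup Q$ such that: (i) for every interpretation $\mathfrak A$ for $\mathcal L$: ($\mathfrak A\models T$ and $\mathfrak A\not\models\varphi$) if and only if there exists an expansion $\mathfrak A'$ of $\mathfrak A$ to $\mathcal L\cup Q$ with $\mathfrak A'\models S^\varphi_T$; (ii) $T\models\varphi$ if and only if $S^\varphi_T$ is unsatisfiable; (iii) if $T$ is finite, then $Q$ is finite with $|Q|\le c\cdot(|T|+|\varphi|)$, $S^\varphi_T$ is finite and $|S^\varphi_T|\le c\cdot(|T|^2+|\varphi|^2)$, for an absolute constant $c$ (independent of $\mathcal L$, $T$, $\varphi$); (iv) $\mathrm{tcons}(S^\varphi_T)\setminus\{\bar0,\bar1\}\subseteq(\mathrm{tcons}(\varphi)\cup\mathrm{tcons}(T))\setminus\{\bar0,\bar1\}$.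
   Context: First-order Gödel logic with truth constants. Fix a countable first-order language $\mathcal L$ and a countable set $C_{\mathcal L}$ with $\{0,1\}\subseteq C_{\mathcal L}\subseteq[0,1]$; for each $c\in C_{\mathcal L}$ there is a truth constant $\bar c$. Formulae are built from atoms and truth constants using $\neg$, $\Delta$, $\wedge,\vee,\rightarrow,\leftrightarrow$, $\eqcirc$ (equality), $\prec$ (strict order), $\forall,\exists$. An interpretation has a nonempty universe, ordinary functions and $[0,1]$-valued relations. Truth values under an assignment $e$: atoms by the relations; $\|\bar c\|=c$; $\|\neg\varphi\|=1$ if $\|\varphi\|=0$ else $0$; $\|\Delta\varphi\|=1$ if $\|\varphi\|=1$ else $0$; $\wedge=\min$, $\vee=\max$; $\|\varphi\to\psi\|=1$ if $\|\varphi\|\le\|\psi\|$ else $\|\psi\|$; $\|\varphi\leftrightarrow\psi\|=\min(\|\varphi\to\psi\|,\|\psi\to\varphi\|)$; $\|\varphi\eqcirc\psi\|=1$ if equal else $0$; $\|\varphi\prec\psi\|=1$ if $\|\varphi\|<\|\psi\|$ else $0$; $\forall=\inf$, $\exists=\sup$. $\mathcal I\models\varphi$ iff $\|\varphi\|^{\mathcal I}_e=1$ for all assignments $e$; $\mathcal I\models T$ iff $\mathcal I\models\psi$ for all $\psi\in T$; $T\models\varphi$ iff every interpretation for $\mathcal L$ that is a model of $T$ is a model of $\varphi$. For languages $\mathcal L_1\subseteq\mathcal L_2$, an interpretation for $\mathcal L_2$ is an expansion of one for $\mathcal L_1$ if they have the same universe and agree on the symbols of $\mathcal L_1$. Size: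 $|x|=1$ for a variable, $|f(t_1,\dots,t_n)|=|p(t_1,\dots,t_n)|=1+\sum|t_i|$; $|\bar c|=1$; $|\neg\varphi|=|\Delta\varphi|=1+|\varphi|$; $|\varphi\diamond\psi|=1+|\varphi|+|\psi|$; $|Qx\,\varphi|=2+|\varphi|$; $|T|=\sum_{\psi\in T}|\psi|$ for finite $T$. $\mathrm{tcons}(\cdot)$ is the set of truth constants occurring. Order clauses: a quantified atom is $Qx\,p(t_0,\dots,t_n)$ with $Q\in\{\forall,\exists\}$, $x$ occurring in $p(t_0,\dots,t_n)$, and for each $i$ either $t_i=x$ or $x$ does not occur in $t_i$. An order literal is $\varepsilon_1\diamond\varepsilon_2$, each $\varepsilon_i$ an atom, truth constant or quantified atom, $\diamond\in\{\eqcirc,\prec\}$. An order clause is a finite set of order literals ($\square$ = empty clause); $\mathcal I\models_e C$ iff some literal of $C$ has value $1$ under $e$; $\mathcal I\models C$ iff for all $e$; $\mathcal I\models S$ iff $\mathcal I\models C$ for all $C\in S$; $S$ is satisfiable iff it has a model. $|C|=\sum_{l\in C}|l|$, $|S|=\sum_{C\in S}|C|$. *)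

(* Defs.v *)
From mathcomp Require Import all_boot all_order all_algebra.
From mathcomp Require Import boolp classical_sets reals.
From mathcomp Require Export Rstruct.
From Stdlib Require List.
Set Implicit Arguments. Unset Strict Implicit. Unset Printing Implicit Defensive.
Import Order.TTheory GRing.Theory Num.Theory.
Local Open Scope ring_scope.

(** Symbols (function or predicate) are pairs (name, arity). *)
Definition sym := (nat * nat)%type.
Definition arity (s : sym) : nat := s.2.

Inductive term := Var of nat | Fn of sym & seq term.

Inductive formula (R : Type) :=
| Atom of sym & seq term
| Cst of R
| Neg of formula R
| Dlt of formula R
| Conj of formula R & formula R
| Disj of formula R & formula R
| Imp of formula R & formula R
| Iff of formula R & formula R
| Eqc of formula R & formula R
| Prec of formula R & formula R
| All of nat & formula R
| Ex of nat & formula R.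
Arguments Cst {R}.
Arguments Atom {R}.

Record language := Lang { Lfun : sym -> Prop; Lpred : sym -> Prop }.

Fixpoint wf_term (Lf : sym -> Prop) (t : term) : Prop :=
  match t with
  | Var _ => True
  | Fn f ts => Lf f /\ size ts = arity f /\
      (fix go (ts : seq term) : Prop :=
         match ts with [::] => True | t :: ts => wf_term Lf t /\ go ts end) ts
  end.

Fixpoint wf_form R (Lf Lp : sym -> Prop) (CL : R -> Prop) (f : formula R) : Prop :=
  match f with
  | Atom p ts => Lp p /\ size ts = arity p /\ List.Forall (wf_term Lf) ts
  | Cst c => CL c
  | Neg a | Dlt a | All _ a | Ex _ a => wf_form Lf Lp CL a
  | Conj a b | Disj a b | Imp a b | Iff a b | Eqc a b | Prec a b =>
      wf_form Lf Lp CL a /\ wf_form Lf Lp CL b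
  end.

Fixpoint tsize (t : term) : nat :=
  match t with
  | Var _ => 1
  | Fn _ ts => 1 + (fix go (ts : seq term) : nat :=
                      match ts with [::] => 0 | t :: ts => tsize t + go ts end) ts
  end%N.

Fixpoint fsize R (f : formula R) : nat :=
  match f with
  | Atom _ ts => 1 + sumn (map tsize ts)
  | Cst _ => 1
  | Neg a | Dlt a => 1 + fsize a
  | Conj a b | Disj a b | Imp a b | Iff a b | Eqc a b | Prec a b =>
      1 + fsize a + fsize b
  | All _ a | Ex _ a => 2 + fsize a
  end%N.

Fixpoint tcons R (f : formula R) : seq R :=
  match f with
  | Atom _ _ => [::]
  | Cst c => [:: c]
  | Neg a | Dlt a | All _ a | Ex _ a => tcons a
  | Conj a b | Disj a b | Imp a b | Iff a b | Eqc a b | Prec a b =>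
      tcons a ++ tcons b
  end.

(** interpretations over a universe D (nonemptiness of D is required separately) *)
Record interp (R : realType) (D : Type) := Interp {
  ifun : sym -> seq D -> D;
  ipred : sym -> seq D -> R;
  ipred01 : forall p ds, 0 <= ipred p ds <= 1 }.

Fixpoint teval D (F : sym -> seq D -> D) (e : nat -> D) (t : term) : D :=
  match t with
  | Var x => e x
  | Fn f ts => F f ((fix go (ts : seq term) : seq D :=
                       match ts with [::] => [::] | t :: ts => teval F e t :: go ts end) ts)
  end.

Definition upd D (e : nat -> D) (x : nat) (d : D) : nat -> D :=
  fun y => if y == x then d else e y.

Definition impv (R : realType) (a b : R) : R := if a <= b then 1 else b.

Fixpoint fval (R : realType) D (I : interp R D) (e : nat -> D) (f : formula R) : R :=
  match f with
  | Atom p ts => ipred I p (map (teval (ifun I) e) ts)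
  | Cst c => c
  | Neg a => if fval I e a == 0 then 1 else 0
  | Dlt a => if fval I e a == 1 then 1 else 0
  | Conj a b => Num.min (fval I e a) (fval I e b)
  | Disj a b => Num.max (fval I e a) (fval I e b)
  | Imp a b => impv (fval I e a) (fval I e b)
  | Iff a b => Num.min (impv (fval I e a) (fval I e b)) (impv (fval I e b) (fval I e a))
  | Eqc a b => if fval I e a == fval I e b then 1 else 0
  | Prec a b => if fval I e a < fval I e b then 1 else 0
  | All x a => inf (range (fun d : D => fval I (upd e x d) a))
  | Ex x a => sup (range (fun d : D => fval I (upd e x d) a))
  end.

Definition fmodels (R : realType) D (I : interp R D) (f : formula R) : Prop :=
  forall e, fval I e f = 1.
Definition tmodels (R : realType) D (I : interp R D) (T : formula R -> Prop) : Prop :=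
  forall psi, T psi -> fmodels I psi.
Definition entails (R : realType) (T : formula R -> Prop) (phi : formula R) : Prop :=
  forall (D : Type), inhabited D -> forall I : interp R D, tmodels I T -> fmodels I phi.

Definition expands (R : realType) (L : language) D (I I' : interp R D) : Prop :=
  (forall f, Lfun L f -> ifun I' f = ifun I f) /\
  (forall p, Lpred L p -> ipred I' p = ipred I p).

Fixpoint occ (x : nat) (t : term) : bool :=
  match t with
  | Var y => y == x
  | Fn _ ts => (fix go (ts : seq term) : bool :=
                  match ts with [::] => false | t :: ts => occ x t || go ts end) ts
  end.
Definition is_var (x : nat) (t : term) : bool :=
  if t is Var y then y == x else false.

Definition qatom_cond (x : nat) (ts : seq term) : Prop :=
  has (occ x) ts /\ all (fun t => is_var x t || ~~ occ x t) ts.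

Definition quantified_atom R (f : formula R) : Prop :=
  match f with
  | All x (Atom _ ts) => qatom_cond x ts
  | Ex x (Atom _ ts) => qatom_cond x ts
  | _ => False
  end.

Definition order_expr R (f : formula R) : Prop :=
  match f with
  | Atom _ _ => True
  | Cst _ => True
  | _ => quantified_atom f
  end.

Definition order_literal R (f : formula R) : Prop :=
  match f with
  | Eqc a b | Prec a b => order_expr a /\ order_expr b
  | _ => False
  end.

(** an order clause: a finite set of order literals, represented by a list *)
Definition clause R := seq (formula R).
Definition is_order_clause R (C : clause R) : Prop :=
  forall l, List.In l C -> order_literal l.
Definition csize R (C : clause R) : nat := sumn (map (@fsize R) C).

Definition csat (R : realType) D (I : interp R D) (e : nat -> D) (C : clause R) : Prop :=
  exists l, List.In l C /\ fval I e l = 1.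
Definition cmodels (R : realType) D (I : interp R D) (C : clause R) : Prop :=
  forall e, csat I e C.
Definition smodels (R : realType) D (I : interp R D) (S : clause R -> Prop) : Prop :=
  forall C, S C -> cmodels I C.
Definition satisfiable (R : realType) (S : clause R -> Prop) : Prop :=
  exists (D : Type), inhabited D /\ exists I : interp R D, smodels I S.

Definition fin_card X (A : X -> Prop) (n : nat) : Prop :=
  exists s : seq X, List.NoDup s /\ (forall x, A x <-> List.In x s) /\ size s = n.
Definition fin_weight X (A : X -> Prop) (w : X -> nat) (n : nat) : Prop :=
  exists s : seq X, List.NoDup s /\ (forall x, A x <-> List.In x s) /\ sumn (map w s) = n.

Definition countable_set X (A : X -> Prop) : Prop :=
  exists f : X -> nat, forall x y, A x -> A y -> f x = f y -> x = y.

(* Main.v *)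
Require Import Defs.
From mathcomp Require Import all_boot all_order all_algebra.
From mathcomp Require Import boolp classical_sets reals Rstruct.
From Stdlib Require List.
From mathcomp Require Import zify.
Import Order.TTheory GRing.Theory Num.Theory.
Local Open Scope ring_scope.
Set Implicit Arguments. Unset Strict Implicit. Unset Printing Implicit Defensive.
Fixpoint term_ind2 (P : term -> Prop) (hv : forall n, P (Var n))
  (hf : forall f ts, (forall t, List.In t ts -> P t) -> P (Fn f ts)) (t : term) {struct t} : P t :=
 match t with
 | Var n => hv n
 | Fn f ts => hf f ts ((fix go (ts : seq term) : forall t, List.In t ts -> P t :=
     match ts with
     | [::] => fun t (h : List.In t [::]) => False_ind _ h
     | t0 :: ts0 => fun t h => match h with
                   | or_introl e => eq_ind t0 P (@term_ind2 P hv hf t0) t e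
                   | or_intror h' => go ts0 t h' end
     end) ts)
 end.

Fixpoint tvars (t : term) : seq nat :=
  match t with
  | Var x => [:: x]
  | Fn _ ts => (fix go (ts : seq term) : seq nat :=
      match ts with [::] => [::] | t :: ts => tvars t ++ go ts end) ts
  end.

Lemma tvarsE f ts : tvars (Fn f ts) = flatten (map tvars ts).
Proof. by elim: ts => //= t ts ->. Qed.

Lemma tevalE D (F : sym -> seq D -> D) e f ts :
  teval F e (Fn f ts) = F f (map (teval F e) ts).
Proof. rewrite /=; congr (F f); by elim: ts => //= t ts ->. Qed.

Lemma tsizeE f ts : Defs.tsize (Fn f ts) = (1 + sumn (map Defs.tsize ts))%N.
Proof. rewrite /=; congr (1 + _)%N; by elim: ts => //= t ts ->. Qed.

Lemma wf_termE Lf f ts : wf_term Lf (Fn f ts) <->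
  Lf f /\ size ts = arity f /\ (forall t, List.In t ts -> wf_term Lf t).
Proof.
rewrite /=; split=> -[h1 [h2 h3]]; (split; first exact: h1); (split; first exact: h2).
  elim: ts h3 {h2} => //= t ts IH [h4 h5] u [<-|hu] //; exact: IH.
elim: ts h3 {h2} => //= t ts IH h; split; first by apply: h; left.
apply: IH => u hu; apply: h; by right.
Qed.

Lemma teval_coinc D (F : sym -> seq D -> D) (e1 e2 : nat -> D) t :
  (forall y, y \in tvars t -> e1 y = e2 y) -> teval F e1 t = teval F e2 t.
Proof.
elim/term_ind2: t => [n|f ts IH] h; first by apply: h; rewrite /= inE.
rewrite !tevalE; congr (F f); rewrite tvarsE in h.
elim: ts IH h => //= t ts IH' IH h.
congr cons.
  apply: IH; first by left.
  by move=> y hy; apply: h; rewrite mem_cat hy.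
apply: IH'; first by move=> u hu; apply: IH; right.
by move=> y hy; apply: h; rewrite mem_cat hy orbT.
Qed.

Lemma teval_transfer D (F1 F2 : sym -> seq D -> D) (Lf : sym -> Prop) e t :
  wf_term Lf t -> (forall f, Lf f -> F1 f = F2 f) -> teval F1 e t = teval F2 e t.
Proof.
elim/term_ind2: t => [n|f ts IH] //= h hF.
move/wf_termE: h => [h1 [_ h3]].
rewrite -!/(teval _ _ (Fn f ts)) !tevalE hF //; congr (F2 f).
elim: ts IH h3 {h1} => //= t ts IH' IH h3; congr cons.
  by apply: IH; [left|apply: h3; left|].
by apply: IH' => [u hu|u hu]; [apply: IH; right|apply: h3; right].
Qed.

Lemma tvars_size t : (size (tvars t) <= Defs.tsize t)%N.
Proof.
elim/term_ind2: t => [n|f ts IH] //.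
rewrite tvarsE tsizeE size_flatten /shape -map_comp.
elim: ts IH => //= t ts IH' IH.
have h1 := IH t (or_introl erefl).
have h2 := IH' (fun u hu => IH u (or_intror hu)).
rewrite /= in h2 *. lia.
Qed.
Fixpoint allvars R (f : formula R) : seq nat :=
  match f with
  | Atom _ ts => flatten (map tvars ts)
  | Cst _ => [::]
  | Neg a | Dlt a => allvars a
  | Conj a b | Disj a b | Imp a b | Iff a b | Eqc a b | Prec a b => allvars a ++ allvars b
  | All x a | Ex x a => x :: allvars a
  end.

Lemma map_teval_coinc D (F : sym -> seq D -> D) (e1 e2 : nat -> D) ts :
  (forall y, y \in flatten (map tvars ts) -> e1 y = e2 y) ->
  map (teval F e1) ts = map (teval F e2) ts.
Proof.
elim: ts => //= t ts IH h; congr cons.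
  by apply: teval_coinc => y hy; apply: h; rewrite mem_cat hy.
by apply: IH => y hy; apply: h; rewrite mem_cat hy orbT.
Qed.

Lemma fval_coinc (R : realType) D (I : interp R D) (f : formula R) (e1 e2 : nat -> D) :
  (forall y, y \in allvars f -> e1 y = e2 y) -> fval I e1 f = fval I e2 f.
Proof.
elim: f e1 e2 => [p ts|c|a IH|a IH|a IHa b IHb|a IHa b IHb|a IHa b IHb|a IHa b IHb
  |a IHa b IHb|a IHa b IHb|x a IH|x a IH] e1 e2 h /=.
all: try done.
all: try (by rewrite (map_teval_coinc _ h)).
all: try (by rewrite (IH e1 e2)).
all: try (by rewrite (IHa e1 e2) ?(IHb e1 e2) // => y hy; apply: h; rewrite /= mem_cat hy ?orbT).
all: have -> : (fun d => fval I (upd e1 x d) a) = (fun d => fval I (upd e2 x d) a) by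
  apply: funext => d; apply: IH => y hy; rewrite /upd;
  case: ifP => // _; apply: h; rewrite /= inE hy orbT.
all: by [].
Qed.

Lemma map_teval_transfer D (F1 F2 : sym -> seq D -> D) (Lf : sym -> Prop) e ts :
  List.Forall (wf_term Lf) ts -> (forall f, Lf f -> F1 f = F2 f) ->
  map (teval F1 e) ts = map (teval F2 e) ts.
Proof.
move=> h hF; elim: h => //= t0 ts0 ht _ ->; congr cons; exact: teval_transfer ht hF.
Qed.

Lemma fval_transfer (R : realType) D (I1 I2 : interp R D) Lf Lp CL (f : formula R) :
  (forall g, Lf g -> ifun I1 g = ifun I2 g) -> (forall p, Lp p -> ipred I1 p = ipred I2 p) ->
  wf_form Lf Lp CL f -> forall e, fval I1 e f = fval I2 e f.
Proof.
move=> hF hP; elim: f => [p ts|c|a IH|a IH|a IHa b IHb|a IHa b IHb|a IHa b IHb|a IHa b IHb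
  |a IHa b IHb|a IHa b IHb|x a IH|x a IH] /= hw e;
 try done; try (by case: hw => h1 [h2 h3]; rewrite hP // (map_teval_transfer _ h3 hF));
 try (by rewrite IH);
 try (by case: hw => h1 h2; rewrite IHa ?IHb);
 (do 2 f_equal; apply: funext => d; exact: IH).
Qed.

Lemma inf01 (R : realType) D (g : D -> R) : inhabited D ->
  (forall d, 0 <= g d <= 1) -> 0 <= inf (range g) <= 1.
Proof.
case=> d0 hg; apply/andP; split.
  apply: lb_le_inf; first by exists (g d0), d0.
  by move=> _ [d _ <-]; case/andP: (hg d).
apply: (@le_trans _ _ (g d0)); last by case/andP: (hg d0).
apply: ge_inf; last by exists d0.
by exists 0 => _ [d _ <-]; case/andP: (hg d).
Qed.

Lemma sup01 (R : realType) D (g : D -> R) : inhabited D ->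
  (forall d, 0 <= g d <= 1) -> 0 <= sup (range g) <= 1.
Proof.
case=> d0 hg; apply/andP; split.
  apply: (@le_trans _ _ (g d0)); first by case/andP: (hg d0).
  apply: ub_le_sup; last by exists d0.
  by exists 1 => _ [d _ <-]; case/andP: (hg d).
apply: ge_sup; first by exists (g d0), d0.
by move=> _ [d _ <-]; case/andP: (hg d).
Qed.

Lemma fval01 (R : realType) D (I : interp R D) Lf Lp CL (f : formula R) :
  inhabited D -> (forall c, CL c -> 0 <= c <= 1) ->
  wf_form Lf Lp CL f -> forall e, 0 <= fval I e f <= 1.
Proof.
move=> hD hC; elim: f => [p ts|c|a IH|a IH|a IHa b IHb|a IHa b IHb|a IHa b IHb|a IHa b IHb
  |a IHa b IHb|a IHa b IHb|x a IH|x a IH] /= hw e.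
- exact: ipred01.
- exact: hC.
- by case: ifP; rewrite ?ler01 ?lexx.
- by case: ifP; rewrite ?ler01 ?lexx.
- case: hw => h1 h2; have /andP[a0 a1] := IHa h1 e; have /andP[b0 b1] := IHb h2 e.
  by rewrite le_min ge_min a0 a1 b0.
- case: hw => h1 h2; have /andP[a0 a1] := IHa h1 e; have /andP[b0 b1] := IHb h2 e.
  by rewrite le_max ge_max a0 a1 b1.
- case: hw => h1 h2; have /andP[a0 a1] := IHa h1 e; have /andP[b0 b1] := IHb h2 e.
  by rewrite /impv; case: ifP => _; rewrite ?ler01 ?lexx ?b0 ?b1.
- case: hw => h1 h2; have /andP[a0 a1] := IHa h1 e; have /andP[b0 b1] := IHb h2 e.
  rewrite /impv; do 2 case: ifP => _;
  by rewrite ?le_min ?ge_min ?ler01 ?lexx ?a0 ?a1 ?b0 ?b1.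
- by case: ifP; rewrite ?ler01 ?lexx.
- by case: ifP; rewrite ?ler01 ?lexx.
- exact: (inf01 hD (fun d => IH hw (upd e x d))).
- exact: (sup01 hD (fun d => IH hw (upd e x d))).
Qed.
Fact Pat_key : unit. Proof. by []. Qed.
Definition Pat R (nm : seq nat -> formula R -> sym) (v : seq nat) (chi : formula R) : formula R :=
  locked_with Pat_key (Atom (nm v chi) (map Var v)).
Lemma PatE R nm v (chi : formula R) : Pat nm v chi = Atom (nm v chi) (map Var v).
Proof. by rewrite /Pat unlock. Qed.

Definition shallow R (nm : seq nat -> formula R -> sym) v (chi : formula R) : formula R :=
  let P := Pat nm v in
  match chi with
  | Atom _ _ | Cst _ => chi
  | Neg a => Neg (P a) | Dlt a => Dlt (P a)
  | Conj a b => Conj (P a) (P b) | Disj a b => Disj (P a) (P b)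
  | Imp a b => Imp (P a) (P b) | Iff a b => Iff (P a) (P b)
  | Eqc a b => Eqc (P a) (P b) | Prec a b => Prec (P a) (P b)
  | All x a => All x (P a) | Ex x a => Ex x (P a)
  end.

Definition children R (chi : formula R) : seq (formula R) :=
  match chi with
  | Atom _ _ | Cst _ => [::]
  | Neg a | Dlt a | All _ a | Ex _ a => [:: a]
  | Conj a b | Disj a b | Imp a b | Iff a b | Eqc a b | Prec a b => [:: a; b]
  end.

Fixpoint sub R (f : formula R) : seq (formula R) :=
  f :: match f with
  | Atom _ _ | Cst _ => [::]
  | Neg a | Dlt a | All _ a | Ex _ a => sub a
  | Conj a b | Disj a b | Imp a b | Iff a b | Eqc a b | Prec a b => sub a ++ sub b
  end.

Definition node_clauses (R : realType) (nm : seq nat -> formula R -> sym) v (chi : formula R)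
  : seq (clause R) :=
  let P := Pat nm v chi in
  let c0 := @Cst R 0 in let c1 := @Cst R 1 in
  match chi with
  | Atom _ _ | Cst _ | All _ _ | Ex _ _ => [:: [:: Eqc P (shallow nm v chi)]]
  | Neg a => let A := Pat nm v a in [:: [:: Prec c0 A; Eqc P c1]; [:: Eqc A c0; Eqc P c0]]
  | Dlt a => let A := Pat nm v a in [:: [:: Prec A c1; Eqc P c1]; [:: Eqc A c1; Eqc P c0]]
  | Conj a b => let A := Pat nm v a in let B := Pat nm v b in
      [:: [:: Prec B A; Eqc P A]; [:: Prec A B; Eqc A B; Eqc P B]]
  | Disj a b => let A := Pat nm v a in let B := Pat nm v b in
      [:: [:: Prec A B; Eqc P A]; [:: Prec B A; Eqc A B; Eqc P B]]
  | Imp a b => let A := Pat nm v a in let B := Pat nm v b in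
      [:: [:: Prec B A; Eqc P c1]; [:: Prec A B; Eqc A B; Eqc P B]]
  | Iff a b => let A := Pat nm v a in let B := Pat nm v b in
      [:: [:: Prec A B; Prec B A; Eqc P c1]; [:: Prec B A; Eqc A B; Eqc P A];
          [:: Prec A B; Eqc A B; Eqc P B]]
  | Eqc a b => let A := Pat nm v a in let B := Pat nm v b in
      [:: [:: Prec A B; Prec B A; Eqc P c1]; [:: Eqc A B; Eqc P c0]]
  | Prec a b => let A := Pat nm v a in let B := Pat nm v b in
      [:: [:: Prec B A; Eqc A B; Eqc P c1]; [:: Prec A B; Eqc P c0]]
  end.

Definition cval (R : realType) D (I : interp R D) e (C : clause R) : bool :=
  has (fun l => fval I e l == 1) C.

Lemma csatE (R : realType) D (I : interp R D) e (C : clause R) : csat I e C <-> cval I e C.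
Proof.
rewrite /csat /cval; elim: C => [|l C IH] /=; first by split=> // -[? []].
split.
  by case=> l' [[<-|hl] h]; [rewrite h eqxx | apply/orP; right; apply/IH; exists l'].
case/orP=> [/eqP h|/IH [l' [h1 h2]]]; first by exists l; split=> //; left.
by exists l'; split=> //; right.
Qed.

Lemma if01 (R : realType) (b : bool) : ((if b then 1 else 0 : R) == 1) = b.
Proof. by case: b; rewrite ?eqxx // eq_sym oner_eq0. Qed.


Lemma nl_neg (R : realType) (a p : R) : 0 <= a ->
  ((0 < a) || (p == 1)) && ((a == 0) || (p == 0)) = (p == if a == 0 then 1 else 0).
Proof.
move=> a0; have [->|ha] := eqVneq a 0; first by rewrite ?ltxx ?eqxx /= ?orbT ?andbT.
have -> : 0 < a by rewrite lt_neqAle eq_sym ha a0.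
by rewrite /= ?orbF.
Qed.

Lemma nl_dlt (R : realType) (a p : R) : a <= 1 ->
  ((a < 1) || (p == 1)) && ((a == 1) || (p == 0)) = (p == if a == 1 then 1 else 0).
Proof.
move=> a1; have [->|ha] := eqVneq a 1; first by rewrite ?ltxx ?eqxx /= ?orbT ?andbT.
have -> : a < 1 by rewrite lt_neqAle ha a1.
by rewrite /= ?orbF.
Qed.

Lemma nl_conj (R : realType) (a b p : R) :
  ((b < a) || (p == a)) && [|| a < b, a == b | p == b] = (p == Num.min a b).
Proof.
case: (ltgtP a b) => h /=; rewrite ?andbT ?orbT ?orbF //.
Qed.

Lemma nl_disj (R : realType) (a b p : R) :
  ((a < b) || (p == a)) && [|| b < a, a == b | p == b] = (p == Num.max a b).
Proof. by case: (ltgtP a b) => h /=; rewrite ?andbT ?orbT ?orbF. Qed.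

Lemma nl_imp (R : realType) (a b p : R) :
  ((b < a) || (p == 1)) && [|| a < b, a == b | p == b] = (p == impv a b).
Proof. by rewrite /impv; case: (ltgtP a b) => h /=; rewrite ?andbT ?orbT ?orbF. Qed.

Lemma nl_iff (R : realType) (a b p : R) : a <= 1 -> b <= 1 ->
  [&& [|| a < b, b < a | p == 1], [|| b < a, a == b | p == a] & [|| a < b, a == b | p == b]]
  = (p == Num.min (impv a b) (impv b a)).
Proof.
move=> a1 b1.
rewrite /impv; case: (ltgtP a b) => h /=; rewrite ?andbT ?orbT ?orbF ?minxx ?(min_r a1) ?(min_l b1) //.
Qed.

Lemma nl_eqc (R : realType) (a b p : R) :
  ([|| a < b, b < a | p == 1]) && ((a == b) || (p == 0)) = (p == if a == b then 1 else 0).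
Proof. by case: (ltgtP a b) => h /=; rewrite ?andbT ?orbT ?orbF. Qed.

Lemma nl_prec (R : realType) (a b p : R) :
  [|| b < a, a == b | p == 1] && ((a < b) || (p == 0)) = (p == if a < b then 1 else 0).
Proof. by case: (ltgtP a b) => h /=; rewrite ?andbT ?orbT ?orbF. Qed.

Lemma node_lemma (R : realType) D (I : interp R D) nm v (chi : formula R) e :
  all (cval I e) (node_clauses nm v chi) = (fval I e (Pat nm v chi) == fval I e (shallow nm v chi)).
Proof.
have hA : forall a, 0 <= fval I e (Pat nm v a) <= 1 by move=> a; rewrite PatE; exact: ipred01.
case: chi => [p ts|c|a|a|a b|a b|a b|a b|a b|a b|x a|x a];
  rewrite /= /cval /= ?if01 ?andbT ?orbF //=.
- by apply: nl_neg; case/andP: (hA a).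
- by apply: nl_dlt; case/andP: (hA a).
- exact: nl_conj.
- exact: nl_disj.
- exact: nl_imp.
- by apply: nl_iff; [case/andP: (hA a)|case/andP: (hA b)].
- exact: nl_eqc.
- exact: nl_prec.
Qed.
Definition is_atom R (chi : formula R) : Prop :=
  match chi with Atom _ _ => True | _ => False end.

Lemma formula_ind_ch R (P : formula R -> Prop) :
  (forall chi, (forall a, List.In a (children chi) -> P a) -> P chi) -> forall chi, P chi.
Proof.
move=> H; elim=> [p ts|c|a IH|a IH|a IHa b IHb|a IHa b IHb|a IHa b IHb|a IHa b IHb
  |a IHa b IHb|a IHa b IHb|x a IH|x a IH]; apply: H => /= u;
 try (by case); try (by case=> [<-|[]]); by case=> [<-|[<-|[]]].
Qed.

Lemma sub_self R (chi : formula R) : List.In chi (sub chi).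
Proof. by case: chi => *; left. Qed.

Lemma sub_children R (chi a c : formula R) :
  List.In a (children chi) -> List.In c (sub a) -> List.In c (sub chi).
Proof.
case: chi => [p ts|c'|a'|a'|a' b|a' b|a' b|a' b|a' b|a' b|x a'|x a'] /=;
 try (by case); try (by case=> [<-|[]] h; right);
 by case=> [<-|[<-|[]]] h; right; apply: List.in_or_app; [left|right].
Qed.

Lemma sub_trans R (chi a c : formula R) :
  List.In a (sub chi) -> List.In c (sub a) -> List.In c (sub chi).
Proof.
elim: chi a => [p ts|c'|a' IH|a' IH|a' IHa b IHb|a' IHa b IHb|a' IHa b IHb|a' IHa b IHb
  |a' IHa b IHb|a' IHa b IHb|x a' IH|x a' IH] a /= [<-|h] hc //; try (by case: h).
all: right.
all: try (by apply: (IH a)).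
all: apply: List.in_or_app; case: (List.in_app_or _ _ _ h) => h';
  [left; exact: (IHa a)|right; exact: (IHb a)].
Qed.

Lemma shallow_val (R : realType) D (I1 I2 : interp R D) nm v (chi : formula R) :
  (forall a, List.In a (children chi) -> forall e, fval I1 e (Pat nm v a) = fval I2 e a) ->
  (is_atom chi -> forall e, fval I1 e chi = fval I2 e chi) ->
  forall e, fval I1 e (shallow nm v chi) = fval I2 e chi.
Proof.
case: chi => [p ts|c|a|a|a b|a b|a b|a b|a b|a b|x a|x a] H Hat e;
 try (by apply: Hat); try done.
all: try (by rewrite /= (H a (or_introl erefl))).
all: try (by rewrite /= (H a (or_introl erefl)) (H b (or_intror (or_introl erefl)))).
all: rewrite /=; have -> : (fun d => fval I1 (upd e x d) (Pat nm v a)) =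
  (fun d => fval I2 (upd e x d) a) by apply: funext => d; apply: H; left.
all: by [].
Qed.

Lemma complete (R : realType) D (I : interp R D) nm v (chi : formula R) :
  (forall chi', List.In chi' (sub chi) -> forall e, all (cval I e) (node_clauses nm v chi')) ->
  forall e, fval I e (Pat nm v chi) = fval I e chi.
Proof.
elim/formula_ind_ch: chi => chi IH H e.
have := H chi (sub_self chi) e; rewrite node_lemma => /eqP ->.
apply: shallow_val => [a ha e'|//].
apply: IH => // c hc; apply: H; exact: sub_children ha hc.
Qed.
Definition clos R (phi : formula R) : formula R := foldr (fun x f => All x f) phi (allvars phi).

Definition Tcl (R : realType) nm (psi : formula R) : seq (clause R) :=
  let v := allvars psi in
  [:: Eqc (Pat nm v psi) (Cst 1)] :: List.flat_map (node_clauses nm v) (sub psi).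

Definition Pcl (R : realType) nm (phi : formula R) : seq (clause R) :=
  let r := clos phi in let v := allvars r in
  [:: Prec (Pat nm v r) (Cst 1)] :: List.flat_map (node_clauses nm v) (sub r).

Definition Sset (R : realType) nm (T : formula R -> Prop) phi (C : clause R) : Prop :=
  (exists psi, T psi /\ List.In C (Tcl nm psi)) \/ List.In C (Pcl nm phi).

Lemma sub_wf R Lf Lp (CL : R -> Prop) (psi chi : formula R) :
  wf_form Lf Lp CL psi -> List.In chi (sub psi) -> wf_form Lf Lp CL chi.
Proof.
elim: psi => [p ts|c|a IH|a IH|a IHa b IHb|a IHa b IHb|a IHa b IHb|a IHa b IHb
  |a IHa b IHb|a IHa b IHb|x a IH|x a IH] /= hw [<-|h] //; try (by case: h).
all: try (by apply: IH).
all: case: hw => h1 h2; case: (List.in_app_or _ _ _ h) => h'; [exact: IHa|exact: IHb].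
Qed.

Lemma sub_allvars R (psi chi : formula R) y :
  List.In chi (sub psi) -> y \in allvars chi -> y \in allvars psi.
Proof.
elim: psi => [p ts|c|a IH|a IH|a IHa b IHb|a IHa b IHb|a IHa b IHb|a IHa b IHb
  |a IHa b IHb|a IHa b IHb|x a IH|x a IH] /= [<-|h] hy //; try (by case: h).
all: try (by apply: IH).
all: try (by rewrite inE (IH h hy) orbT).
all: rewrite mem_cat; case: (List.in_app_or _ _ _ h) => h';
  [by rewrite (IHa h' hy)|by rewrite (IHb h' hy) orbT].
Qed.

Lemma all_In T (p : pred T) s x : all p s -> List.In x s -> p x.
Proof. elim: s => //= y s IH /andP[h1 h2] [<-|h] //; exact: IH. Qed.

Lemma inf_all1 (R : realType) D (g : D -> R) : inhabited D -> (forall d, g d = 1) ->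
  inf (range g) = 1.
Proof.
case=> d0 hg; have -> : range g = [set (1:R)]%classic.
  by apply/seteqP; split => [_ [d _ <-]|_ ->]; [rewrite /= hg|exists d0].
exact: inf1.
Qed.

Lemma clos1 (R : realType) D (I : interp R D) (phi : formula R) xs :
  inhabited D -> fmodels I phi -> fmodels I (foldr (fun x f => All x f) phi xs).
Proof.
move=> hD hphi; elim: xs => //= x xs IH e /=.
by apply: inf_all1 => // d; apply: IH.
Qed.

Lemma wf_foldAll R Lf Lp (CL : R -> Prop) (phi : formula R) xs :
  wf_form Lf Lp CL phi -> wf_form Lf Lp CL (foldr (fun x f => All x f) phi xs).
Proof. by move=> h; elim: xs. Qed.

Lemma clos_le (R : realType) D (I : interp R D) Lf Lp CL (phi : formula R) xs e0 :
  inhabited D -> (forall c, CL c -> 0 <= c <= 1) -> wf_form Lf Lp CL phi ->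
  forall e, fval I e (foldr (fun x f => All x f) phi xs) <=
            fval I (fun y => if y \in xs then e0 y else e y) phi.
Proof.
move=> hD hC hw; elim: xs => [|x xs IH] e /=.
  by have -> : (fun y => e y) = e by [].
apply: (@le_trans _ _ (fval I (upd e x (e0 x)) (foldr (fun x f => All x f) phi xs))).
  apply: ge_inf; last by exists (e0 x).
  exists 0 => _ [d _ <-]; have /andP[] // := fval01 I hD hC (wf_foldAll xs hw) (upd e x d).
apply: (le_trans (IH _)).
have -> : (fun y => if y \in xs then e0 y else upd e x (e0 x) y) =
          (fun y => if y \in x :: xs then e0 y else e y).
  apply: funext => y; rewrite inE /upd; case: (y == x) /eqP => [->|_] /=.
    by case: (x \in xs).
  by [].
by [].
Qed.
From Stdlib Require Import Classical.

Lemma clos_lt (R : realType) D (I : interp R D) Lf Lp CL (phi : formula R) :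
  inhabited D -> (forall c, CL c -> 0 <= c <= 1) -> wf_form Lf Lp CL phi ->
  ~ fmodels I phi -> forall e, fval I e (clos phi) < 1.
Proof.
move=> hD hC hw hn e.
have [e0 he0] : exists e0, fval I e0 phi <> 1.
  by apply: not_all_ex_not => h; apply: hn.
rewrite /clos; apply: (le_lt_trans (@clos_le _ _ I _ _ _ phi (allvars phi) e0 hD hC hw e)).
rewrite (@fval_coinc _ _ _ _ _ e0); last by move=> y ->.
have /andP[_ h1] := fval01 I hD hC hw e0.
by rewrite lt_neqAle h1 andbT; apply/eqP.
Qed.

Definition env D (d0 : D) (v : seq nat) (ds : seq D) (y : nat) : D := nth d0 ds (index y v).

Lemma env_map D (d0 : D) v (e : nat -> D) y : y \in v -> env d0 v (map e v) y = e y.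
Proof.
move=> hy; rewrite /env (nth_map y) ?index_mem // nth_index //.
Qed.

Definition dec (R : realType) (L : language) (CL : R -> Prop) (nm : seq nat -> formula R -> sym)
  (s : sym) : option (seq nat * formula R) :=
  match pselect (exists vc : seq nat * formula R,
                  s = nm vc.1 vc.2 /\ wf_form (Lfun L) (Lpred L) CL vc.2) with
  | left h => Some (proj1_sig (cid h))
  | right _ => None
  end.

Lemma dec_spec (R : realType) L CL nm s (vc : seq nat * formula R) :
  dec L CL nm s = Some vc -> s = nm vc.1 vc.2 /\ wf_form (Lfun L) (Lpred L) CL vc.2.
Proof. rewrite /dec; case: pselect => // h [<-]; exact: (proj2_sig (cid h)). Qed.

Lemma dec_nm (R : realType) L CL nm v (chi : formula R) :
  (forall v1 c1 v2 c2, wf_form (Lfun L) (Lpred L) CL c1 -> wf_form (Lfun L) (Lpred L) CL c2 ->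
     nm v1 c1 = nm v2 c2 -> v1 = v2 /\ c1 = c2) ->
  wf_form (Lfun L) (Lpred L) CL chi -> dec L CL nm (nm v chi) = Some (v, chi).
Proof.
move=> hinj hw; case h: (dec L CL nm (nm v chi)) => [[v' c']|].
  have [h1 h2] := dec_spec h; have [-> ->] := hinj _ _ _ _ hw h2 h1; by [].
move: h; rewrite /dec; case: pselect => // -[]; by exists (v, chi).
Qed.

Lemma dec_L (R : realType) L CL nm p :
  (forall v (chi : formula R), ~ Lpred L (nm v chi)) -> Lpred L p -> dec L CL nm p = None.
Proof.
move=> hf hp; case h: (dec L CL nm p) => [[v' c']|] //.
by have [h1 _] := dec_spec h; move: hp; rewrite h1 => /hf.
Qed.

Definition Ipred (R : realType) L CL nm D (A : interp R D) (d0 : D) (s : sym) (ds : seq D) : R :=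
  match dec L CL nm s with
  | Some vc => fval A (env d0 vc.1 ds) vc.2
  | None => ipred A s ds
  end.

Lemma Ipred01 (R : realType) L CL nm D (A : interp R D) (d0 : D) :
  (forall c, CL c -> 0 <= c <= 1) -> forall s ds, 0 <= Ipred L CL nm A d0 s ds <= 1.
Proof.
move=> hC s ds; rewrite /Ipred; case h: (dec L CL nm s) => [vc|]; last exact: ipred01.
have [_ hw] := dec_spec h; exact: (fval01 A (inhabits d0) hC hw).
Qed.

Definition Aexp (R : realType) L CL nm D (A : interp R D) (d0 : D)
  (hC : forall c, CL c -> 0 <= c <= 1) : interp R D :=
  @Interp R D (ifun A) (Ipred L CL nm A d0) (Ipred01 L nm A d0 hC).
Lemma Aexp_pred (R : realType) L (CL : R -> Prop) nm D (A : interp R D) (d0 : D) (hC : forall c, CL c -> 0 <= c <= 1) p :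
  (forall v (chi : formula R), ~ Lpred L (nm v chi)) -> Lpred L p ->
  ipred (Aexp L nm A d0 hC) p = ipred A p.
Proof. by move=> hf hp; apply: funext => ds; rewrite /= /Ipred (@dec_L _ L CL nm p hf hp). Qed.

Lemma Aexp_pat (R : realType) L (CL : R -> Prop) nm D (A : interp R D) (d0 : D) (hC : forall c, CL c -> 0 <= c <= 1) v (chi : formula R) :
  (forall v1 c1 v2 c2, wf_form (Lfun L) (Lpred L) CL c1 -> wf_form (Lfun L) (Lpred L) CL c2 ->
     nm v1 c1 = nm v2 c2 -> v1 = v2 /\ c1 = c2) ->
  wf_form (Lfun L) (Lpred L) CL chi -> (forall y, y \in allvars chi -> y \in v) ->
  forall e, fval (Aexp L nm A d0 hC) e (Pat nm v chi) = fval A e chi.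
Proof.
move=> hinj hw hv e; rewrite PatE /= /Ipred (@dec_nm _ L CL nm v chi hinj hw) /= -map_comp.
apply: fval_coinc => y hy; exact: env_map (hv y hy).
Qed.

Lemma root_sound (R : realType) L (CL : R -> Prop) nm D (A : interp R D) (d0 : D) (hC : forall c, CL c -> 0 <= c <= 1) (psi : formula R) chi :
  (forall v (chi : formula R), ~ Lpred L (nm v chi)) ->
  (forall v1 c1 v2 c2, wf_form (Lfun L) (Lpred L) CL c1 -> wf_form (Lfun L) (Lpred L) CL c2 ->
     nm v1 c1 = nm v2 c2 -> v1 = v2 /\ c1 = c2) ->
  wf_form (Lfun L) (Lpred L) CL psi -> List.In chi (sub psi) ->
  forall C, List.In C (node_clauses nm (allvars psi) chi) -> cmodels (Aexp L nm A d0 hC) C.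
Proof.
move=> hf hinj hw hchi C hC' e; apply/csatE.
apply: (all_In _ hC'); rewrite node_lemma; apply/eqP.
have hwc := sub_wf hw hchi.
rewrite (@Aexp_pat R L CL nm D A d0 hC (allvars psi) chi hinj hwc); last by move=> y; exact: sub_allvars hchi.
symmetry; apply: shallow_val.
  move=> a ha e'; have hs : List.In a (sub psi) := sub_trans hchi (sub_children ha (sub_self a)).
  apply: (@Aexp_pat R L CL nm D A d0 hC (allvars psi) a hinj); first exact: sub_wf hw hs.
  by move=> y; exact: sub_allvars hs.
move=> _ e'; apply: (fval_transfer (Lf := Lfun L) (Lp := Lpred L) (CL := CL)) => //.
by move=> p hp; rewrite (@Aexp_pred R L CL nm D A d0 hC p hf hp).
Qed.
Lemma In_all T (p : pred T) s : (forall x, List.In x s -> p x) -> all p s.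
Proof.
elim: s => //= y s IH h; apply/andP; split; first by apply: h; left.
by apply: IH => x hx; apply: h; right.
Qed.

Lemma semantic_i (R : realType) (L : language) (CL : R -> Prop) (T : formula R -> Prop)
  (phi : formula R) nm :
  (forall c, CL c -> 0 <= c <= 1) ->
  (forall v (chi : formula R), ~ Lpred L (nm v chi)) ->
  (forall v1 c1 v2 c2, wf_form (Lfun L) (Lpred L) CL c1 -> wf_form (Lfun L) (Lpred L) CL c2 ->
     nm v1 c1 = nm v2 c2 -> v1 = v2 /\ c1 = c2) ->
  wf_form (Lfun L) (Lpred L) CL phi -> (forall psi, T psi -> wf_form (Lfun L) (Lpred L) CL psi) ->
  forall D, inhabited D -> forall A : interp R D,
   (tmodels A T /\ ~ fmodels A phi) <-> exists A', expands L A A' /\ smodels A' (Sset nm T phi).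
Proof.
move=> hC hf hinj hwp hwT D hD A; split.
  case=> hTm hnp; case: (hD) => d0.
  exists (Aexp L nm A d0 hC); split.
    by split=> [//|p hp]; rewrite (@Aexp_pred R L CL nm D A d0 hC p hf hp).
  move=> C [[psi [hT hCin]]|hCin].
    case: hCin => [<-|h].
      move=> e; apply/csatE; rewrite /cval /= orbF if01.
      by rewrite (@Aexp_pat R L CL nm D A d0 hC (allvars psi) psi hinj (hwT _ hT)) // (hTm psi hT e).
    have [chi [h1 h2]] := proj1 (List.in_flat_map _ _ _) h.
    exact: (@root_sound R L CL nm D A d0 hC psi chi hf hinj (hwT _ hT) h1).
  have hwc : wf_form (Lfun L) (Lpred L) CL (clos phi) by apply: wf_foldAll.
  case: hCin => [<-|h].
    move=> e; apply/csatE; rewrite /cval /= orbF if01.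
    rewrite (@Aexp_pat R L CL nm D A d0 hC (allvars (clos phi)) (clos phi) hinj hwc) //.
    exact: (clos_lt hD hC hwp hnp).
  have [chi [h1 h2]] := proj1 (List.in_flat_map _ _ _) h.
  exact: (@root_sound R L CL nm D A d0 hC (clos phi) chi hf hinj hwc h1).
case=> A' [[hfun hpred] hS].
have hfun' : forall g, Lfun L g -> ifun A g = ifun A' g by move=> g hg; rewrite hfun.
have hpred' : forall p, Lpred L p -> ipred A p = ipred A' p by move=> p hp; rewrite hpred.
have hcomp : forall psi, (forall C, List.In C (List.flat_map (node_clauses nm (allvars psi)) (sub psi)) -> Sset nm T phi C) ->
    forall e, fval A' e (Pat nm (allvars psi) psi) = fval A' e psi.
  move=> psi hin; apply: complete => chi' hchi e; apply: In_all => C hC'.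
  apply/csatE; apply: (hS C); apply: hin; apply/List.in_flat_map; by exists chi'.
case: (hD) => d0; split.
  move=> psi hT e; rewrite (fval_transfer hfun' hpred' (hwT _ hT)) -hcomp.
    have := hS _ (or_introl (ex_intro _ psi (conj hT (or_introl erefl)))) e.
    by move/csatE; rewrite /cval /= orbF if01 => /eqP.
  by move=> C hCi; left; exists psi; split=> //; right.
move=> hm.
have hlt := hS _ (or_intror (or_introl erefl)) (fun _ => d0).
move/csatE: hlt; rewrite /cval /= orbF if01 hcomp; last first.
  by move=> C hCi; right; right.
have hm' : fmodels A' phi by move=> e; rewrite -(fval_transfer hfun' hpred' hwp).
by rewrite /clos (clos1 _ hD hm') ltxx.
Qed.
Lemma ord_Pat R nm v (chi : formula R) : order_expr (Pat nm v chi).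
Proof. by rewrite PatE. Qed.

Lemma Forall_Var Lf v : List.Forall (wf_term Lf) (map Var v).
Proof. elim: v => //= x v IH; by constructor. Qed.

Lemma wf_Pat R Lf (Lp : sym -> Prop) (CL : R -> Prop) nm v (chi : formula R) :
  Lp (nm v chi) -> (nm v chi).2 = size v -> wf_form Lf Lp CL (Pat nm v chi).
Proof. by move=> h1 h2; rewrite PatE /= /arity size_map h2; split=> //; split=> //; apply: Forall_Var. Qed.

Lemma ord_AllPat R nm v x (a : formula R) : x \in v -> order_expr (All x (Pat nm v a)).
Proof.
move=> hx; rewrite PatE /= /qatom_cond; split.
  by rewrite has_map; apply/hasP; exists x => //=; rewrite eqxx.
by rewrite all_map; apply/allP => y _ /=; rewrite orbN.
Qed.

Lemma ord_ExPat R nm v x (a : formula R) : x \in v -> order_expr (Ex x (Pat nm v a)).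
Proof.
move=> hx; rewrite PatE /= /qatom_cond; split.
  by rewrite has_map; apply/hasP; exists x => //=; rewrite eqxx.
by rewrite all_map; apply/allP => y _ /=; rewrite orbN.
Qed.

Lemma node_struct (R : realType) Lf (Lp Lp' : sym -> Prop) (CL : R -> Prop) nm v (chi : formula R) C l :
  CL 0 -> CL 1 -> (forall p, Lp p -> Lp' p) ->
  (forall v (c : formula R), (nm v c).2 = size v) ->
  (forall a, List.In a (chi :: children chi) -> Lp' (nm v a)) ->
  (forall y, y \in allvars chi -> y \in v) ->
  wf_form Lf Lp CL chi ->
  List.In C (node_clauses nm v chi) -> List.In l C ->
  order_literal l /\ wf_form Lf Lp' CL l.
Proof.
move=> c0 c1 hLp har hQ hv hw hC hl.
have hP : forall a, List.In a (chi :: children chi) -> wf_form Lf Lp' CL (Pat nm v a).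
  by move=> a ha; apply: wf_Pat; [exact: hQ|exact: har].
have hP0 := hP chi (or_introl erefl).
case: chi hQ hv hw hP hP0 hC => [p ts|c|a|a|a b|a b|a b|a b|a b|a b|x a|x a] hQ hv hw hP hP0 /= hC;
 try (have hPa := hP a); try (have hPb := hP b);
 move: hl; repeat (case: hC => [<-|hC]); try (by case: hC); move=> hl;
 repeat (case: hl => [<-|hl]); try (by case: hl);
 rewrite /=; (repeat split); try exact: ord_Pat; try assumption;
 try (by case: hw => h1 [h2 h3]; auto);
 try (by apply: ord_AllPat; apply: hv; rewrite /= inE eqxx);
 try (by apply: ord_ExPat; apply: hv; rewrite /= inE eqxx);
 try (by apply: hPa; right; left); try (by apply: hPb; right; right; left);
 try (by apply: hPa; right; right; left).
Qed.

Lemma node_tcons (R : realType) nm v (chi : formula R) C l x :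
  List.In C (node_clauses nm v chi) -> List.In l C -> List.In x (tcons l) ->
  x = 0 \/ x = 1 \/ List.In x (tcons chi).
Proof.
move=> hC hl hx.
case: chi hC => [p ts|c|a|a|a b|a b|a b|a b|a b|a b|y a|y a] /= hC;
 move: hl hx; repeat (case: hC => [<-|hC]); try (by case: hC); move=> hl;
 repeat (case: hl => [<-|hl]); try (by case: hl);
 rewrite /= ?PatE /=;
 repeat (case=> [<-|]); auto.
Qed.
Lemma fsize_Pat R nm v (chi : formula R) : fsize (Pat nm v chi) = (1 + size v)%N.
Proof. rewrite PatE /=; congr (1 + _)%N; by elim: v => //= x v ->. Qed.

Lemma node_size (R : realType) nm v (chi : formula R) :
  (sumn (map (@csize R) (node_clauses nm v chi)) <= 30 * (size v + 2) + fsize chi)%N.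
Proof.
case: chi => [p ts|c|a|a|a b|a b|a b|a b|a b|a b|y a|y a];
 rewrite /csize /= ?fsize_Pat; lia.
Qed.

Lemma size_sub R (f : formula R) : (size (sub f) <= fsize f)%N.
Proof.
elim: f => [p ts|c|a IH|a IH|a IHa b IHb|a IHa b IHb|a IHa b IHb|a IHa b IHb
  |a IHa b IHb|a IHa b IHb|x a IH|x a IH] //=; rewrite ?size_cat; lia.
Qed.

Lemma sub_fsize R (f chi : formula R) : List.In chi (sub f) -> (fsize chi <= fsize f)%N.
Proof.
elim: f => [p ts|c|a IH|a IH|a IHa b IHb|a IHa b IHb|a IHa b IHb|a IHa b IHb
  |a IHa b IHb|a IHa b IHb|x a IH|x a IH] /= [<-|h] //; try (by case: h).
all: try (by have := IH h; lia).
all: case: (List.in_app_or _ _ _ h) => h'; [have := IHa h'|have := IHb h']; lia.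
Qed.

Lemma allvars_size R (f : formula R) : (size (allvars f) <= fsize f)%N.
Proof.
elim: f => [p ts|c|a IH|a IH|a IHa b IHb|a IHa b IHb|a IHa b IHb|a IHa b IHb
  |a IHa b IHb|a IHa b IHb|x a IH|x a IH] //=; rewrite ?size_cat; try lia.
rewrite size_flatten /shape -map_comp; elim: ts => //= t ts IH.
have := tvars_size t; lia.
Qed.

Lemma sumn_flat_map X Y (w : Y -> nat) (f : X -> seq Y) (s : seq X) :
  sumn (map w (List.flat_map f s)) = sumn (map (fun x => sumn (map w (f x))) s).
Proof. elim: s => //= x s IH; by rewrite map_cat sumn_cat IH. Qed.

Lemma sumn_le X (f g : X -> nat) (s : seq X) :
  (forall x, List.In x s -> (f x <= g x)%N) -> (sumn (map f s) <= sumn (map g s))%N.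
Proof.
elim: s => //= x s IH h; apply: leq_add; first by apply: h; left.
by apply: IH => y hy; apply: h; right.
Qed.

Lemma sumn_flat_le X Y (w : Y -> nat) (f : X -> seq Y) (s : seq X) B :
  (forall x, List.In x s -> (sumn (map w (f x)) <= B)%N) ->
  (sumn (map w (List.flat_map f s)) <= size s * B)%N.
Proof.
move=> h; rewrite sumn_flat_map.
apply: (@leq_trans (sumn (map (fun _ => B) s))); first exact: sumn_le.
by elim: s {h} => //= x s IH; rewrite mulSn leq_add2l.
Qed.

Lemma sum_sq X (g : X -> nat) (s : seq X) :
  (sumn (map (fun x => g x ^ 2) s) <= (sumn (map g s)) ^ 2)%N.
Proof. elim: s => //= x s IH; nia. Qed.

Lemma root_size (R : realType) nm (psi : formula R) v :
  (size v <= fsize psi)%N ->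
  (sumn (map (@csize R) (List.flat_map (node_clauses nm v) (sub psi))) <= 99 * fsize psi ^ 2)%N.
Proof.
move=> hv.
apply: (@leq_trans (size (sub psi) * (30 * (size v + 2) + fsize psi))).
  apply: sumn_flat_le => chi hchi.
  apply: (leq_trans (node_size nm v chi)); have := sub_fsize hchi; lia.
have := size_sub psi; have : (0 < fsize psi)%N by clear hv; case: psi.
move=> h1 h2; apply: (@leq_trans (fsize psi * (30 * (fsize psi + 2) + fsize psi))).
  apply: leq_mul => //; lia.
nia.
Qed.

Lemma Tcl_size (R : realType) nm (psi : formula R) :
  (sumn (map (@csize R) (Tcl nm psi)) <= 103 * fsize psi ^ 2)%N.
Proof.
rewrite /Tcl /= /csize /= -/(csize _) fsize_Pat.
have := root_size nm (allvars_size psi); have := allvars_size psi.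
have : (0 < fsize psi)%N by case: psi.
rewrite /csize; nia.
Qed.

Lemma fsize_fold R (phi : formula R) xs :
  fsize (foldr (fun x f => All x f) phi xs) = (fsize phi + 2 * size xs)%N.
Proof. elim: xs => [|x xs IH] /=; [lia|rewrite IH; lia]. Qed.

Lemma Pcl_size (R : realType) nm (phi : formula R) :
  (sumn (map (@csize R) (Pcl nm phi)) <= 900 * fsize phi ^ 2)%N.
Proof.
have h3 : (fsize (clos phi) <= 3 * fsize phi)%N.
  rewrite /clos fsize_fold; have := allvars_size phi; lia.
rewrite /Pcl /= /csize /= fsize_Pat.
have := root_size nm (allvars_size (clos phi)); have := allvars_size (clos phi).
have : (0 < fsize phi)%N by clear h3; case: phi.
rewrite /csize; nia.
Qed.

Lemma nodup_exists X (w : X -> nat) (l : seq X) : exists l', List.NoDup l' /\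
  (forall x, List.In x l' <-> List.In x l) /\ (sumn (map w l') <= sumn (map w l))%N.
Proof.
elim: l => [|x l [l' [h1 [h2 h3]]]]; first by exists [::]; split; [constructor|split].
case: (classic (List.In x l')) => hx.
  exists l'; split=> //; split; last by rewrite /=; lia.
  move=> y; split; first by move=> /h2 hy; right.
  by case=> [<-|/h2].
exists (x :: l'); split; first by constructor.
split; last by rewrite /=; lia.
move=> y /=; split; case=> [->|hy]; auto; right; exact/h2.
Qed.
Fixpoint tenc (t : term) : GenTree.tree nat :=
  match t with
  | Var n => GenTree.Node 0 [:: GenTree.Leaf n]
  | Fn f ts => GenTree.Node 1 (GenTree.Leaf f.1 :: GenTree.Leaf f.2 :: map tenc ts)
  end.

Lemma tenc_inj : injective tenc.
Proof.
move=> t; elim/term_ind2: t => [n|[f1 f2] ts IH] [m|[g1 g2] us] /= h; try (by case: h).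
  by case: h => ->.
case: h => h1 h2 hts; rewrite h1 h2; congr (Fn _ _).
elim: ts us IH hts => [|t ts IHts] [|u us] //= IH [h3 h4].
by rewrite (IH t (or_introl erefl) u h3) (IHts us (fun t ht => IH t (or_intror ht)) h4).
Qed.

Fixpoint fenc R (cf : R -> nat) (f : formula R) : GenTree.tree nat :=
  match f with
  | Atom p ts => GenTree.Node 0 [:: GenTree.Leaf p.1; GenTree.Leaf p.2; GenTree.Node 0 (map tenc ts)]
  | Cst c => GenTree.Node 1 [:: GenTree.Leaf (cf c)]
  | Neg a => GenTree.Node 2 [:: fenc cf a]
  | Dlt a => GenTree.Node 3 [:: fenc cf a]
  | Conj a b => GenTree.Node 4 [:: fenc cf a; fenc cf b]
  | Disj a b => GenTree.Node 5 [:: fenc cf a; fenc cf b]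
  | Imp a b => GenTree.Node 6 [:: fenc cf a; fenc cf b]
  | Iff a b => GenTree.Node 7 [:: fenc cf a; fenc cf b]
  | Eqc a b => GenTree.Node 8 [:: fenc cf a; fenc cf b]
  | Prec a b => GenTree.Node 9 [:: fenc cf a; fenc cf b]
  | All x a => GenTree.Node 10 [:: GenTree.Leaf x; fenc cf a]
  | Ex x a => GenTree.Node 11 [:: GenTree.Leaf x; fenc cf a]
  end.

Lemma fenc_inj R (cf : R -> nat) Lf Lp (CL : R -> Prop) :
  (forall x y, CL x -> CL y -> cf x = cf y -> x = y) ->
  forall f g, wf_form Lf Lp CL f -> wf_form Lf Lp CL g -> fenc cf f = fenc cf g -> f = g.
Proof.
move=> hcf; elim=> [[p1 p2] ts|c|a IH|a IH|a IHa b IHb|a IHa b IHb|a IHa b IHb|a IHa b IHb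
  |a IHa b IHb|a IHa b IHb|x a IH|x a IH]
  [[q1 q2] us|d|a'|a'|a' b'|a' b'|a' b'|a' b'|a' b'|a' b'|y a'|y a'] //= hf hg.
- case=> -> -> /(inj_map tenc_inj) ->; by [].
- by case=> /(hcf _ _ hf hg) ->.
all: try (by case=> /(IH _ hf hg) ->).
all: try (by case: hf hg => hf1 hf2 [hg1 hg2] [/(IHa _ hf1 hg1) -> /(IHb _ hf2 hg2) ->]).
all: by case=> -> /(IH _ hf hg) ->.
Qed.

Definition frg (P : nat -> nat -> Prop) (h : forall n k, exists m, (k <= m)%N /\ P m n)
  (n k : nat) : nat := proj1_sig (cid (h n k)).

Fixpoint fr (P : nat -> nat -> Prop) (h : forall n k, exists m, (k <= m)%N /\ P m n)
  (n k : nat) : nat :=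
  match k with 0 => frg h n 0 | k'.+1 => frg h n (fr h n k').+1 end.

Lemma frg_P P h n k : (k <= @frg P h n k)%N /\ P (@frg P h n k) n.
Proof. rewrite /frg; by case: (cid (h n k)). Qed.

Lemma fr_P P h n k : P (@fr P h n k) n.
Proof. case: k => [|k] /=; [exact: (frg_P h n 0).2|exact: (frg_P h n _).2]. Qed.

Lemma fr_lt P h n k : (@fr P h n k < @fr P h n k.+1)%N.
Proof. exact: (frg_P h n (fr h n k).+1).1. Qed.

Lemma fr_mono P h n k j : (k < j)%N -> (@fr P h n k < @fr P h n j)%N.
Proof.
elim: j => // j IH; rewrite ltnS leq_eqVlt => /orP[/eqP ->|/IH hk]; first exact: fr_lt.
exact: ltn_trans hk (fr_lt h n j).
Qed.

Lemma fr_inj P h n : injective (@fr P h n).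
Proof.
move=> k j hkj; case: (ltngtP k j) => // hk.
  by have := fr_mono h n hk; rewrite hkj ltnn.
by have := fr_mono h n hk; rewrite hkj ltnn.
Qed.
Lemma sub_tcons R (psi chi : formula R) x :
  List.In chi (sub psi) -> List.In x (tcons chi) -> List.In x (tcons psi).
Proof.
elim: psi => [p ts|c|a IH|a IH|a IHa b IHb|a IHa b IHb|a IHa b IHb|a IHa b IHb
  |a IHa b IHb|a IHa b IHb|y a IH|y a IH] /= [<-|h] hx //; try (by case: h).
all: try (by apply: IH).
all: apply: List.in_or_app; case: (List.in_app_or _ _ _ h) => h';
  [left; exact: IHa|right; exact: IHb].
Qed.

Lemma tcons_fold R (phi : formula R) xs : tcons (foldr (fun x f => All x f) phi xs) = tcons phi.
Proof. by elim: xs. Qed.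

Lemma root_struct (R : realType) Lf (Lp Lp' : sym -> Prop) (CL : R -> Prop) nm (psi : formula R) C l :
  CL 0 -> CL 1 -> (forall p, Lp p -> Lp' p) ->
  (forall v (c : formula R), (nm v c).2 = size v) ->
  (forall chi, List.In chi (sub psi) -> Lp' (nm (allvars psi) chi)) ->
  wf_form Lf Lp CL psi ->
  List.In C (List.flat_map (node_clauses nm (allvars psi)) (sub psi)) -> List.In l C ->
  order_literal l /\ wf_form Lf Lp' CL l.
Proof.
move=> c0 c1 hLp har hQ hw /List.in_flat_map [chi [hchi hC]] hl.
apply: (node_struct c0 c1 hLp har _ _ (sub_wf hw hchi) hC hl).
  move=> a [<-|ha]; first exact: hQ.
  by apply: hQ; apply: (sub_trans hchi); exact: sub_children ha (sub_self a).
by move=> y hy; exact: sub_allvars hchi hy.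
Qed.

Lemma sumn_ones X (l : seq X) : sumn (map (fun _ => 1%N) l) = size l.
Proof. by elim: l => //= x l ->; rewrite add1n. Qed.
Theorem theorem1 :
  exists c : nat,
  forall (L : language) (CL : Rdefinitions.R -> Prop)
         (T : formula Rdefinitions.R -> Prop) (phi : formula Rdefinitions.R),
    CL 0 -> CL 1 -> (forall x, CL x -> 0 <= x <= 1) -> countable_set CL ->
    (* infinite supply of fresh predicate symbols of every arity *)
    (forall n k : nat, exists m : nat, (k <= m)%N /\ ~ Lpred L (m, n)) ->
    wf_form (Lfun L) (Lpred L) CL phi ->
    (forall psi, T psi -> wf_form (Lfun L) (Lpred L) CL psi) ->
    exists (Q : sym -> Prop) (S : clause Rdefinitions.R -> Prop),
      (forall q, Q q -> ~ Lpred L q) /\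
      (forall C, S C -> is_order_clause C /\
         forall l, List.In l C ->
           wf_form (Lfun L) (fun p => Lpred L p \/ Q p) CL l) /\
      (* (i) *)
      (forall (D : Type), inhabited D -> forall A : interp Rdefinitions.R D,
         (tmodels A T /\ ~ fmodels A phi) <->
         exists A' : interp Rdefinitions.R D, expands L A A' /\ smodels A' S) /\
      (* (ii) *)
      (entails T phi <-> ~ satisfiable S) /\
      (* (iii) *)
      (forall nT : nat, fin_weight T (@fsize _) nT ->
         exists nQ nS : nat,
           fin_card Q nQ /\ (nQ <= c * (nT + fsize phi))%N /\
           fin_weight S (@csize _) nS /\ (nS <= c * (nT ^ 2 + fsize phi ^ 2))%N) /\
      (* (iv) *)
      (forall C l x, S C -> List.In l C -> List.In x (tcons l) -> x <> 0 -> x <> 1 ->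
         List.In x (tcons phi) \/ exists psi, T psi /\ List.In x (tcons psi)).
Proof.
exists 900%N => L CL T phi h0 h1 hC [cf hcf] hfr hwp hwT.
pose h' : forall n k, exists m, (k <= m)%N /\ (fun m n => ~ Lpred L (m, n)) m n := hfr.
pose nm := fun (v : seq nat) (chi : formula Rdefinitions.R) =>
  (fr h' (size v) (pickle (v, fenc cf chi)), size v).
have har : forall v c, (nm v c).2 = size v by [].
have hf : forall v chi, ~ Lpred L (nm v chi) by move=> v chi; exact: (fr_P h').
have hinj : forall v1 c1 v2 c2, wf_form (Lfun L) (Lpred L) CL c1 -> wf_form (Lfun L) (Lpred L) CL c2 ->
     nm v1 c1 = nm v2 c2 -> v1 = v2 /\ c1 = c2.
  move=> v1 c1 v2 c2 hw1 hw2 [] he hs.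
  rewrite hs in he; move/fr_inj/(pcan_inj pickleK_inv): he => [-> hfe]; split=> //.
  exact: (fenc_inj hcf hw1 hw2 hfe).
pose Q := fun q => (exists psi, T psi /\ exists chi, List.In chi (sub psi) /\ q = nm (allvars psi) chi)
  \/ (exists chi, List.In chi (sub (clos phi)) /\ q = nm (allvars (clos phi)) chi).
have hsem := @semantic_i _ L CL T phi nm hC hf hinj hwp hwT.
exists Q, (Sset nm T phi); split.
  by move=> q [[psi [_ [chi [_ ->]]]]|[chi [_ ->]]]; apply: hf.
split.
  have hwc : wf_form (Lfun L) (Lpred L) CL (clos phi) by apply: wf_foldAll.
  suff H : forall C, Sset nm T phi C -> forall l, List.In l C ->
     order_literal l /\ wf_form (Lfun L) (fun p => Lpred L p \/ Q p) CL l.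
    by move=> C hS; split=> [l hl|l hl]; have [] := H C hS l hl.
  move=> C [[psi [hT [<-|hCi]]]|[<-|hCi]] l hl.
  - case: hl => [<-|[]]; split; first by split=> //; exact: ord_Pat.
    split=> //; apply: wf_Pat => //; right; left; exists psi; split=> //.
    by exists psi; split=> //; exact: sub_self.
  - apply: (root_struct h0 h1 _ har _ (hwT _ hT) hCi hl); first by move=> p hp; left.
    by move=> chi hchi; right; left; exists psi; split=> //; exists chi.
  - case: hl => [<-|[]]; split; first by split=> //; exact: ord_Pat.
    split=> //; apply: wf_Pat => //; right; right.
    by exists (clos phi); split=> //; exact: sub_self.
  - apply: (root_struct h0 h1 _ har _ hwc hCi hl); first by move=> p hp; left.
    by move=> chi hchi; right; right; exists chi.
split; first exact: hsem.
split.
  split.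
    move=> hent [D [hD [A' hA']]].
    have [hT hn] := proj2 (hsem D hD A') (ex_intro _ A' (conj (conj (fun _ _ => erefl) (fun _ _ => erefl)) hA')).
    exact: hn (hent D hD A' hT).
  move=> hns D hD A hT; apply: NNPP => hn; apply: hns.
  have [A' [_ hA']] := proj1 (hsem D hD A) (conj hT hn).
  by exists D; split=> //; exists A'.
split.
  move=> nT [s [hnd [hs hsum]]].
  pose lQ := map (nm (allvars (clos phi))) (sub (clos phi)) ++
             List.flat_map (fun psi => map (nm (allvars psi)) (sub psi)) s.
  pose lS := Pcl nm phi ++ List.flat_map (Tcl nm) s.
  have [lQ' [hQ1 [hQ2 hQ3]]] := nodup_exists (fun _ => 1%N) lQ.
  have [lS' [hS1 [hS2 hS3]]] := nodup_exists (@csize _) lS.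
  exists (size lQ'), (sumn (map (@csize _) lS')); split.
    exists lQ'; split=> //; split=> // q; rewrite hQ2; split.
      case=> [[psi [hT [chi [hchi ->]]]]|[chi [hchi ->]]]; apply: List.in_or_app.
        right; apply/List.in_flat_map; exists psi; split; first exact/hs.
        exact: List.in_map.
      by left; apply: List.in_map.
    move=> hq; case: (List.in_app_or _ _ _ hq).
      by move/List.in_map_iff => [chi [<- hchi]]; right; exists chi.
    move/List.in_flat_map => [psi [hps /List.in_map_iff [chi [<- hchi]]]].
    by left; exists psi; split; [exact/hs|exists chi].
  split.
    rewrite -!sumn_ones in hQ3 *.
    apply: (leq_trans hQ3); rewrite map_cat sumn_cat sumn_flat_map !sumn_ones size_map.
    have e1 : (size (sub (clos phi)) <= 3 * fsize phi)%N.
      apply: (leq_trans (size_sub _)); rewrite /clos fsize_fold; have := allvars_size phi; lia.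
    have e2 : (sumn [seq sumn [seq 1%N | _ <- map (nm (allvars x)) (sub x)] | x <- s] <= nT)%N.
      rewrite -hsum; apply: sumn_le => x _; rewrite sumn_ones size_map; exact: size_sub.
    lia.
  split.
    exists lS'; split=> //; split=> // C; rewrite hS2; split.
      rewrite /lS; case=> [[psi [hT hCi]]|hCi]; apply: (List.in_or_app (Pcl nm phi)); last by left.
      by right; apply/List.in_flat_map; exists psi; split; first exact/hs.
    rewrite /lS => hq; case: (List.in_app_or (Pcl nm phi) _ _ hq) => [hCi|/List.in_flat_map [psi [hps hCi]]]; first by right.
    by left; exists psi; split; first exact/hs.
  apply: (leq_trans hS3); rewrite map_cat sumn_cat sumn_flat_map.
  have e1 := Pcl_size nm phi.
  have e2 : (sumn [seq sumn [seq csize i | i <- Tcl nm x] | x <- s] <= 103 * nT ^ 2)%N.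
    apply: (@leq_trans (sumn (map (fun x => 103 * fsize x ^ 2)%N s))).
      by apply: sumn_le => x _; exact: Tcl_size.
    rewrite -hsum; have := sum_sq (@fsize _) s.
    have -> : forall s' : seq (formula Rdefinitions.R), sumn (map (fun x => 103 * fsize x ^ 2)%N s') = (103 * sumn (map (fun x => fsize x ^ 2) s'))%N.
      move=> s'; elim: s' => //= y s' ->; by rewrite mulnDr.
    lia.
  apply: (leq_trans (leq_add e1 e2)).
  rewrite mulnDr addnC; apply: leq_add => //; exact: leq_mul.
move=> C l x [[psi [hT [<-|hCi]]]|[<-|hCi]] hl hx hx0 hx1.
- move: hl hx => [<-|[]]; rewrite /= PatE /=; by case=> [h|[]]; rewrite h in hx1.
- move/List.in_flat_map: hCi => [chi [hchi hC']].
  case: (node_tcons hC' hl hx) => [//|[//|hx']].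
  by right; exists psi; split=> //; exact: sub_tcons hchi hx'.
- move: hl hx => [<-|[]]; rewrite /= PatE /=; by case=> [h|[]]; rewrite h in hx1.
- move/List.in_flat_map: hCi => [chi [hchi hC']].
  case: (node_tcons hC' hl hx) => [//|[//|hx']].
  by left; rewrite -(tcons_fold _ (allvars phi)); exact: sub_tcons hchi hx'.
Qed.
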